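(* Let $\ell\ge1$, $r_0,\dots,r_\ell\ge1$ integers, $d_0,\dots,d_\ell$ integers, $\mathbf{g}\ge0$ an integer, $\mu_k=d_k/r_k$, $r_V=\sum_kr_k$, $d_V=\sum_kd_k$, $\pi_R=\prod_k(r_k-1)!$, and $c>\max_k\mu_k$ real. With the integrals $\alpha_0,\alpha_j,\alpha_{jk},\beta_0,\beta_j$ defined in the context, for all $1\le j,k\le\ell$ with $j\ne k$: $\alpha_0=\frac{\pi_R}{r_V!}(cr_V-d_V)$, $\alpha_j=\frac{\pi_R}{(r_V+1)!}r_j\big(c(r_V+1)-d_V-\mu_j\big)$, $\alpha_{jk}=\frac{\pi_R}{(r_V+2)!}r_jr_k\big(c(r_V+2)-d_V-\mu_j-\mu_k\big)$, $\alpha_{jj}=\frac{\pi_R}{(r_V+2)!}r_j(r_j+1)\big(c(r_V+2)-d_V-2\mu_j\big)$, $\beta_0=\frac{\pi_R}{(r_V-1)!}\big((r_V-1)r_Vc+2(1-\mathbf{g})-(r_V-1)d_V\big)$, $\beta_j=\frac{\pi_Rr_j}{r_V!}\big(r_V(r_V-1)c+2(1-\mathbf{g})-d_V(r_V-2)-r_V\mu_j\big)$.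
   Context: $\Delta=\{x\in\mathbb{R}^\ell:L_k(x)\ge0,\ k=0,\dots,\ell\}$ with $L_j(x)=x_j$ for $1\le j\le\ell$ and $L_0(x)=1-\sum_{j=1}^\ell x_j$; $d\mu$ is Lebesgue measure on $\mathbb{R}^\ell$; on each facet $F_j=\Delta\cap\{L_j=0\}$, $d\sigma$ is the measure with $dL_j\wedge d\sigma=-d\mu$, and $\int_{\partial\Delta}$ is the sum of the integrals over the facets. $p_c(x)=\big(c-\sum_{k=0}^\ell\mu_kL_k(x)\big)\prod_{k=0}^\ell L_k(x)^{r_k-1}$ and $Q(x)=\frac{2(1-\mathbf{g})}{c-\sum_k\mu_kL_k(x)}+\sum_{k:\,r_k\ge2}\frac{r_k(r_k-1)}{L_k(x)}$. For $1\le r,s\le\ell$: $\alpha_0=\int_\Delta p_c\,d\mu$, $\alpha_r=\int_\Delta x_rp_c\,d\mu$, $\alpha_{rs}=\int_\Delta x_rx_sp_c\,d\mu$, $\beta_0=\int_\Delta Qp_c\,d\mu+\int_{\partial\Delta}p_c\,d\sigma$, $\beta_r=\int_\Delta Qx_rp_c\,d\mu+\int_{\partial\Delta}x_rp_c\,d\sigma$. *)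

(* Defs.v *)
From HB Require Import structures.
From mathcomp Require Import all_boot all_order all_algebra.
From mathcomp Require Import all_classical all_reals all_analysis.
Set Implicit Arguments. Unset Strict Implicit. Unset Printing Implicit Defensive.
Import Order.TTheory GRing.Theory Num.Theory.
Local Open Scope ring_scope.

Section SimplexIntegrals.
Variable R : realType.

(* Points of R^l are encoded as functions x : nat -> R, the coordinate x_j
   (1 <= j <= l) being x j; other indices are irrelevant. *)
Definition upd (x : nat -> R) (i : nat) (t : R) : nat -> R :=
  fun k => if k == i then t else x k.

(* Lebesgue integral over R^n computed as an iterated one-dimensional
   Lebesgue integral (Fubini): coordinate n innermost, coordinate 1 outermost. *)
Fixpoint iint (n : nat) (F : (nat -> R) -> R) : R :=
  match n with
  | 0 => F (fun _ => 0)
  | m.+1 => iint m (fun x => Rintegral (@lebesgue_measure R) setT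
                               (fun t => F (upd x m.+1 t)))
  end.

Definition Lk (l k : nat) (x : nat -> R) : R :=
  if k == 0%N then 1 - \sum_(1 <= j < l.+1) x j else x k.

Definition in_simplex (l : nat) (x : nat -> R) : bool :=
  [forall k : 'I_l.+1, 0 <= Lk l k x].

Definition simplex_int (l : nat) (f : (nat -> R) -> R) : R :=
  iint l (fun x => if in_simplex l x then f x else 0).

(* Parametrization of the hyperplane {L_j = 0} by R^(l-1):
   for j >= 1, insert x_j = 0; for j = 0, x_i = y_i (i < l) and
   x_l = 1 - sum_{i<l} y_i. In both cases the measure sigma with
   dL_j /\ dsigma = -dmu is (as a positive measure) the pushforward of
   Lebesgue measure on R^(l-1) by this parametrization. *)
Definition facet_pt (l j : nat) (y : nat -> R) : nat -> R :=
  if j == 0%N then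
    (fun i => if i == l then 1 - \sum_(1 <= i0 < l) y i0 else y i)
  else (fun i => if (i < j)%N then y i else if i == j then 0 else y i.-1).

Definition facet_int (l j : nat) (f : (nat -> R) -> R) : R :=
  iint l.-1 (fun y => let x := facet_pt l j y in
                      if in_simplex l x then f x else 0).

Definition boundary_int (l : nat) (f : (nat -> R) -> R) : R :=
  \sum_(0 <= j < l.+1) facet_int l j f.

Definition muk (r : nat -> nat) (d : nat -> int) (k : nat) : R :=
  (d k)%:~R / (r k)%:R.

Definition pc (l : nat) (r : nat -> nat) (d : nat -> int) (c : R)
  (x : nat -> R) : R :=
  (c - \sum_(0 <= k < l.+1) muk r d k * Lk l k x)
  * \prod_(0 <= k < l.+1) Lk l k x ^+ (r k).-1.

Definition Qf (l : nat) (r : nat -> nat) (d : nat -> int) (g : nat) (c : R)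
  (x : nat -> R) : R :=
  2 * (1 - g%:R) / (c - \sum_(0 <= k < l.+1) muk r d k * Lk l k x)
  + \sum_(0 <= k < l.+1 | (2 <= r k)%N) ((r k * (r k - 1))%:R / Lk l k x).

Definition alpha0 l r d c : R := simplex_int l (pc l r d c).
Definition alpha1 l r d c (j : nat) : R :=
  simplex_int l (fun x => x j * pc l r d c x).
Definition alpha2 l r d c (j k : nat) : R :=
  simplex_int l (fun x => x j * x k * pc l r d c x).
Definition beta0 l r d g c : R :=
  simplex_int l (fun x => Qf l r d g c x * pc l r d c x)
  + boundary_int l (pc l r d c).
Definition beta1 l r d g c (j : nat) : R :=
  simplex_int l (fun x => Qf l r d g c x * x j * pc l r d c x)
  + boundary_int l (fun x => x j * pc l r d c x).

End SimplexIntegrals.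

(* Main.v *)
Require Import Defs.
From HB Require Import structures.
From mathcomp Require Import all_boot all_order all_algebra.
From mathcomp Require Import all_classical all_reals all_analysis.
From mathcomp Require Import ring lra zify.
Import Order.TTheory GRing.Theory Num.Theory.
Import numFieldNormedType.Exports.
Local Open Scope ring_scope.

Section OneD.
Local Open Scope classical_set_scope.
Context {R : realType}.
Local Notation mu := (@lebesgue_measure R).

Definition Bc (p q : nat) : R := (p`! * q`!)%:R / ((p + q).+1`!)%:R.

Lemma cont_pq (s : R) p q : continuous (fun t : R => (s - t) ^+ p * t ^+ q).
Proof.
move=> x; apply: cvgM; last exact: exprn_continuous.
apply: (@continuous_comp _ _ _ (fun t => s - t) (fun x => x ^+ p)).
  by apply: (@cvgB _ R^o); [exact: cvg_cst|exact: cvg_id].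
exact: exprn_continuous.
Qed.

Lemma int_pow (s : R) p : 0 <= s ->
  \int[mu]_(t in `[0, s]) (t ^+ p) = s ^+ p.+1 / p.+1%:R.
Proof.
rewrite le_eqVlt => /predU1P[<-|s0].
  by rewrite set_itv1 Rintegral_set1 expr0n mul0r.
rewrite /Rintegral (@continuous_FTC2 _ _ (fun t => t ^+ p.+1 / p.+1%:R))//=.
- by rewrite expr0n /= mul0r subr0.
- by apply: continuous_subspaceT => x; exact: exprn_continuous.
- split.
  + by move=> x _; apply: derivableM => //; exact: exprn_derivable.
  + apply: cvg_at_right_filter; apply: cvgM; last exact: cvg_cst.
    exact: exprn_continuous.
  + apply: cvg_at_left_filter; apply: cvgM; last exact: cvg_cst.
    exact: exprn_continuous.
- move=> x _; rewrite derive1Mr; last exact: exprn_derivable.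
  rewrite derive1E exp_derive scaler1 /=.
  by rewrite mulrAC -mulr_natr divff ?mul1r // pnatr_eq0.
Qed.

Lemma integ_cont (a s : R) (f : R -> R) : continuous f ->
  mu.-integrable `[a, s] (EFin \o f).
Proof.
move=> cf; apply: continuous_compact_integrable; first exact: segment_compact.
exact/continuous_subspaceT.
Qed.

Lemma integ_pq (s : R) p q :
  mu.-integrable `[0, s] (EFin \o (fun t : R => (s - t) ^+ p * t ^+ q)).
Proof. exact/integ_cont/cont_pq. Qed.

Lemma int_beta (s : R) p q : 0 <= s ->
  \int[mu]_(t in `[0, s]) ((s - t) ^+ p * t ^+ q) = Bc p q * s ^+ (p + q).+1.
Proof.
move=> s0; elim: p q => [|p IH] q.
  under eq_Rintegral do rewrite expr0 mul1r.
  rewrite int_pow // /Bc fact0 mul1n add0n factS natrM.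
  have hQ : (q`!)%:R != 0 :> R by rewrite pnatr_eq0 -lt0n fact_gt0.
  by field; rewrite hQ /= addrC natr1 pnatr_eq0.
transitivity (\int[mu]_(t in `[0, s]) (s * ((s - t) ^+ p * t ^+ q) - (s - t) ^+ p * t ^+ q.+1)).
  by apply: eq_Rintegral => t _; rewrite exprS exprS; ring.
rewrite RintegralB //; last first.
  have := integ_pq s p q.+1; by [].
  apply: integ_cont => x; apply: cvgM; [exact: cvg_cst|exact: cont_pq].
rewrite RintegralZl //; last exact: integ_pq.
rewrite !IH /Bc addSn addnS.
set P := p`!; set Q := q`!.
rewrite !factS !natrM -/P -/Q.
have hP : P%:R != 0 :> R by rewrite pnatr_eq0 -lt0n fact_gt0.
have hQ : Q%:R != 0 :> R by rewrite pnatr_eq0 -lt0n fact_gt0.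
have hF : ((p + q).+1`!)%:R != 0 :> R by rewrite pnatr_eq0 -lt0n fact_gt0.
rewrite !exprS.
field.
have hF0 : ((p + q)`!)%:R != 0 :> R by rewrite pnatr_eq0 -lt0n fact_gt0.
have hpq : 0 <= p%:R + q%:R :> R by rewrite addr_ge0.
by rewrite hF0 /= !lt0r_neq0 //; lra.
Qed.

Lemma cont_sum {I : Type} (s : R) (r : seq I) (w : I -> R) (p q : I -> nat) :
  continuous (fun t : R => \sum_(i <- r) w i * ((s - t) ^+ p i * t ^+ q i)).
Proof.
elim: r => [|i r IH].
  have -> : (fun t : R => \sum_(i <- [::]) w i * ((s - t) ^+ p i * t ^+ q i))
     = cst 0 by apply/funext => t; rewrite big_nil.
  exact: cst_continuous.
have -> : (fun t : R => \sum_(j <- i :: r) w j * ((s - t) ^+ p j * t ^+ q j))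
   = (fun t => w i * ((s - t) ^+ p i * t ^+ q i)
        + \sum_(j <- r) w j * ((s - t) ^+ p j * t ^+ q j)).
  by apply/funext => t; rewrite big_cons.
move=> x; apply: cvgD; last exact: IH.
by apply: cvgM; [exact: cvg_cst|exact: cont_pq].
Qed.

Lemma int_sum_cc {I : Type} (s : R) (r : seq I) (w : I -> R) (p q : I -> nat) :
  0 <= s ->
  \int[mu]_(t in `[0, s]) (\sum_(i <- r) w i * ((s - t) ^+ p i * t ^+ q i))
  = \sum_(i <- r) w i * (Bc (p i) (q i) * s ^+ (p i + q i).+1).
Proof.
move=> s0; elim: r => [|i r IH].
  under eq_Rintegral do rewrite big_nil.
  by rewrite big_nil Rintegral_cst // mul0r.
under eq_Rintegral do rewrite big_cons.
rewrite RintegralD //; last first.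
- exact/integ_cont/cont_sum.
- apply/integ_cont => x; apply: cvgM; [exact: cvg_cst|exact: cont_pq].
rewrite RintegralZl //; last exact: integ_pq.
by rewrite int_beta // IH big_cons.
Qed.

Lemma patch_itv (s t : R) (b0 b1 : bool) (g : R -> R) :
  (if (if b0 then 0 < s - t else 0 <= s - t) && (if b1 then 0 < t else 0 <= t) then g t else 0)
  = (g \_ [set` Interval (BSide (~~ b1) 0) (BSide b0 s)]) t.
Proof.
rewrite patchE mem_setE in_itv /=.
by case: b0; case: b1 => /=; rewrite ?subr_gt0 ?subr_ge0 // andbC.
Qed.

Lemma int1 {I : Type} (s : R) (b0 b1 : bool) (r : seq I) (w : I -> R) (p q : I -> nat) :
  0 <= s ->
  \int[mu]_t (if (if b0 then 0 < s - t else 0 <= s - t) && (if b1 then 0 < t else 0 <= t)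
               then \sum_(i <- r) w i * ((s - t) ^+ p i * t ^+ q i) else 0)
  = \sum_(i <- r) w i * (Bc (p i) (q i) * s ^+ (p i + q i).+1).
Proof.
move=> s0.
set g := (fun t : R => \sum_(i <- r) w i * ((s - t) ^+ p i * t ^+ q i)).
have cg : continuous g by exact: cont_sum.
have ig : mu.-integrable `[0, s] (EFin \o g) by exact: integ_cont.
under eq_Rintegral do rewrite (patch_itv s _ b0 b1 g).
rewrite -Rintegral_mkcond -(int_sum_cc s r w p q s0) -/g.
have sub : forall b c, [set` Interval (BSide b 0) (BSide c s)] `<=` `[0, s].
  by move=> b c; apply: subset_itvScc; case: b; case: c; rewrite bnd_simp.
case: b0; case: b1 => /=.
- rewrite Rintegral_itv_obnd_cbnd; last first.
    by apply: integrableS ig => //; exact: sub.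
  rewrite Rintegral_itv_bndo_bndc //.
  by apply: integrableS ig => //; exact: sub.
- rewrite Rintegral_itv_bndo_bndc //.
  by apply: integrableS ig => //; exact: sub.
- rewrite Rintegral_itv_obnd_cbnd //.
  by apply: integrableS ig => //; exact: sub.
- by [].
Qed.
End OneD.

Section Multi.
Local Open Scope classical_set_scope.
Context {R : realType}.
Local Notation mu := (@lebesgue_measure R).

Definition Mon n (a : nat -> nat) (x : nat -> R) : R :=
  \prod_(0 <= k < n.+1) Lk n k x ^+ a k.
Definition PolyS n (s : seq (R * (nat -> nat))) x : R :=
  \sum_(p <- s) p.1 * Mon n p.2 x.
Definition Pf n (a : nat -> nat) : nat := (\prod_(0 <= k < n.+1) (a k)`!)%N.
Definition Sm n (a : nat -> nat) : nat := (\sum_(0 <= k < n.+1) a k)%N.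
Definition Dir n a : R := (Pf n a)%:R / ((Sm n a + n)`!)%:R.
Definition DirS n (s : seq (R * (nat -> nat))) : R := \sum_(p <- s) p.1 * Dir n p.2.
Definition cnd (b : bool) (v : R) := if b then 0 < v else 0 <= v.
Definition inS n (S : pred nat) (x : nat -> R) :=
  \big[andb/true]_(0 <= k < n.+1) cnd (S k) (Lk n k x).

Lemma big_split0 {T : Type} (idx : T) (op : Monoid.law idx) m (F : nat -> T) :
  \big[op/idx]_(0 <= k < m.+1) F k = op (F 0%N) (\big[op/idx]_(1 <= k < m.+1) F k).
Proof. by rewrite big_ltn. Qed.

Lemma big_split0l {T : Type} (idx : T) (op : Monoid.law idx) m (F : nat -> T) :
  \big[op/idx]_(0 <= k < m.+2) F k =
  op (F 0%N) (op (\big[op/idx]_(1 <= k < m.+1) F k) (F m.+1)).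
Proof. by rewrite big_ltn // big_nat_recr. Qed.

Lemma Lk_upd0 m (x : nat -> R) t :
  Lk m.+1 0 (upd x m.+1 t) = Lk m 0 x - t.
Proof.
rewrite /Lk /= big_nat_recr //= /upd eqxx.
rewrite (@eq_big_nat _ _ _ 1 m.+1 _ (fun j => x j)); first by ring.
by move=> j /andP[_ hj]; rewrite ifF //; apply/negbTE; rewrite neq_ltn hj.
Qed.

Lemma Lk_updk m (x : nat -> R) t k : (1 <= k <= m)%N ->
  Lk m.+1 k (upd x m.+1 t) = Lk m k x.
Proof.
move=> /andP[k1 km]; rewrite /Lk ifF; last by case: k k1 {km}.
rewrite ifF; last by case: k k1 {km}.
by rewrite /upd ifF //; apply/negbTE; rewrite neq_ltn ltnS km.
Qed.

Lemma Lk_updm m (x : nat -> R) t : Lk m.+1 m.+1 (upd x m.+1 t) = t.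
Proof. by rewrite /Lk /= /upd eqxx. Qed.


Definition Kc m (S : pred nat) (x : nat -> R) :=
  \big[andb/true]_(1 <= k < m.+1) cnd (S k) (Lk m k x).
Definition Km m (a : nat -> nat) (x : nat -> R) : R :=
  \prod_(1 <= k < m.+1) Lk m k x ^+ a k.
Definition shift m (a : nat -> nat) : nat -> nat :=
  fun k => if k == 0%N then (a 0%N + a m.+1).+1 else a k.
Definition sstep m (s : seq (R * (nat -> nat))) :=
  [seq (p.1 * Bc (p.2 0%N) (p.2 m.+1), shift m p.2) | p <- s].

Lemma inS_upd m S x t : inS m.+1 S (upd x m.+1 t) =
  cnd (S 0%N) (Lk m 0 x - t) && (Kc m S x && cnd (S m.+1) t).
Proof.
rewrite /inS big_split0l Lk_upd0 Lk_updm; congr (_ && (_ && _)).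
by apply: eq_big_nat => k hk; rewrite Lk_updk.
Qed.

Lemma inS_split m S x : inS m S x = cnd (S 0%N) (Lk m 0 x) && Kc m S x.
Proof. by rewrite /inS big_split0. Qed.

Lemma Mon_upd m a x t : Mon m.+1 a (upd x m.+1 t) =
  (Lk m 0 x - t) ^+ a 0%N * (Km m a x * t ^+ a m.+1).
Proof.
rewrite /Mon big_split0l Lk_upd0 Lk_updm; congr (_ * (_ * _)).
by apply: eq_big_nat => k hk; rewrite Lk_updk.
Qed.

Lemma Mon_shift m a x : Mon m (shift m a) x =
  Lk m 0 x ^+ (a 0%N + a m.+1).+1 * Km m a x.
Proof.
rewrite /Mon big_split0 /shift eqxx; congr (_ * _).
by apply: eq_big_nat => k /andP[hk _]; rewrite ifF //; case: k hk.
Qed.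

Lemma cnd_ge0 b v : cnd b v -> 0 <= v.
Proof. by case: b => //= /ltW. Qed.

Lemma cnd_sub b b' (s t : R) : cnd b (s - t) -> cnd b' t -> cnd b s.
Proof.
move=> h /cnd_ge0 ht; move: h; rewrite /cnd; case: b => h; lra.
Qed.

Lemma inner m S s x :
  \int[mu]_t (if inS m.+1 S (upd x m.+1 t) then PolyS m.+1 s (upd x m.+1 t) else 0)
  = if inS m S x then PolyS m (sstep m s) x else 0.
Proof.
set L0 := Lk m 0 x.
transitivity (\int[mu]_t (if cnd (S 0%N) (L0 - t) && (Kc m S x && cnd (S m.+1) t)
   then \sum_(p <- s) (p.1 * Km m p.2 x) * ((L0 - t) ^+ p.2 0%N * t ^+ p.2 m.+1)
   else 0)).
  apply: eq_Rintegral => t _; rewrite inS_upd; case: ifP => // _.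
  by rewrite /PolyS; apply: eq_bigr => p _; rewrite Mon_upd; ring.
rewrite inS_split -/L0.
case hK: (Kc m S x); last first.
  under eq_Rintegral do rewrite andFb andbF.
  by rewrite andbF Rintegral_cst // mul0r.
under eq_Rintegral do rewrite andTb.
case h0: (cnd (S 0%N) L0).
  rewrite int1; last exact: cnd_ge0 h0.
  rewrite /= /PolyS /sstep big_map; apply: eq_bigr => p _.
  by rewrite Mon_shift /=; ring.
transitivity (\int[mu]_(t in setT) (0 : R)); last by rewrite Rintegral_cst // mul0r.
apply: eq_Rintegral => t _; case: ifP => // /andP[h1 h2].
by move: (cnd_sub _ _ _ _ h1 h2); rewrite h0.
Qed.


Lemma fact_neq0 n : (n`!)%:R != 0 :> R.
Proof. by rewrite pnatr_eq0 -lt0n fact_gt0. Qed.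

Lemma alg1 (A B U P V : nat) : U%:R != 0 :> R -> V%:R != 0 :> R ->
  (A * B)%:R / U%:R * ((U * P)%:R / V%:R) = (A * (P * B))%:R / V%:R :> R.
Proof. by move=> hu hv; rewrite !natrM; field; rewrite hu hv. Qed.

Lemma Dir_step m a : Bc (a 0%N) (a m.+1) * Dir m (shift m a) = Dir m.+1 a.
Proof.
rewrite /Dir /Pf /Sm /Bc.
rewrite [in RHS]big_split0l [X in _ = _ / ((X + _)`!)%:R]big_split0l.
rewrite !big_split0 /shift eqxx /=.
rewrite (@eq_big_nat _ _ _ 1 m.+1 (fun k => (if k == 0%N then (a 0%N + a m.+1).+1 else a k)`!) (fun k => (a k)`!)); last first.
  by move=> k /andP[hk _]; rewrite ifF //; case: k hk.
rewrite (@eq_big_nat _ _ _ 1 m.+1 (fun k => (if k == 0%N then (a 0%N + a m.+1).+1 else a k)) (fun k => a k)); last first.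
  by move=> k /andP[hk _]; rewrite ifF //; case: k hk.
set P := (\prod_(1 <= i < m.+1) (a i)`!)%N.
set Q := (\sum_(1 <= i < m.+1) a i)%N.
have -> : ((a 0%N + a m.+1).+1 + Q + m = a 0%N + (Q + a m.+1) + m.+1)%N by lia.
exact: alg1 (fact_neq0 _) (fact_neq0 _).
Qed.

Lemma main n S s :
  iint n (fun x => if inS n S x then PolyS n s x else 0) = DirS n s.
Proof.
elim: n s => [|m IH] s.
  rewrite /= /inS big_nat1 /Lk /= big_geq // subr0.
  have -> : cnd (S 0%N) 1 by rewrite /cnd; case: (S 0%N); rewrite ?ltr01 ?ler01.
  rewrite /PolyS /DirS; apply: eq_bigr => p _.
  rewrite /Mon big_nat1 /Lk /= big_geq // subr0 expr1n /Dir /Pf /Sm !big_nat1 addn0.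
  by rewrite divff ?fact_neq0 // mulr1.
rewrite /=.
have -> : (fun x => \int[mu]_t (if inS m.+1 S (upd x m.+1 t)
        then PolyS m.+1 s (upd x m.+1 t) else 0))
   = (fun x => if inS m S x then PolyS m (sstep m s) x else 0).
  by apply/funext => x; exact: inner.
rewrite IH /DirS /sstep big_map; apply: eq_bigr => p _ /=.
by rewrite -mulrA Dir_step.
Qed.

End Multi.

Section Facet.
Context {R : realType}.

Lemma in_simplexE n (x : nat -> R) : in_simplex n x = inS n pred0 x.
Proof.
rewrite /inS /cnd /= big_mkord big_andE /in_simplex.
by apply: eq_forallb => k.
Qed.

Definition rho (m j k : nat) : nat :=
  if j == 0%N then (if k == 0%N then m.+1 else k) else bump j k.

Lemma big_rho {T : Type} (idx : T) (op : Monoid.com_law idx) m j (F : nat -> T) :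
  (j <= m.+1)%N ->
  \big[op/idx]_(0 <= k < m.+2) F k =
  op (F j) (\big[op/idx]_(0 <= k < m.+1) F (rho m j k)).
Proof.
move=> hj; rewrite /rho; case: eqP => [->|/eqP j0].
  rewrite big_split0 [in RHS]big_split0 /= big_nat_recr //=.
  rewrite (@eq_big_nat _ _ _ 1 m.+1 (fun k => F (if k == 0%N then m.+1 else k)) F).
    by congr (op _ _); apply: Monoid.mulmC.
  by move=> k /andP[hk _]; rewrite ifF //; case: k hk.
rewrite !big_mkord.
have hj' : (j < m.+2)%N by [].
by rewrite (bigD1_ord (Ordinal hj')) //=.
Qed.


Lemma facet_bump m j (y : nat -> R) k : (0 < j)%N ->
  facet_pt m.+1 j y (bump j k) = y k.
Proof.
move=> j0; rewrite /facet_pt ifF; last by case: j j0.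
rewrite /bump; case: (leqP j k) => h /=.
  rewrite add1n ifF; last by apply/negbTE; rewrite -leqNgt; apply: leqW.
  by rewrite ifF //; apply/negbTE; rewrite neq_ltn ltnS h orbT.
by rewrite add0n h.
Qed.

Lemma facet_j m j (y : nat -> R) : (0 < j)%N -> facet_pt m.+1 j y j = 0.
Proof.
move=> j0; rewrite /facet_pt ifF; last by case: j j0.
by rewrite ltnn eqxx.
Qed.

Lemma sum_facet m j (y : nat -> R) : (0 < j <= m.+1)%N ->
  \sum_(1 <= i < m.+2) facet_pt m.+1 j y i = \sum_(1 <= i < m.+1) y i.
Proof.
move=> /andP[j0 jm].
pose G i := if i == 0%N then 0 else facet_pt m.+1 j y i.
have h1 : \sum_(0 <= i < m.+2) G i = \sum_(1 <= i < m.+2) facet_pt m.+1 j y i.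
  rewrite big_split0 /G /= add0r; apply: eq_big_nat => i /andP[hi _].
  by rewrite ifF //; case: i hi.
have jn0 : (j == 0%N) = false by case: j j0 {jm G h1}.
rewrite -h1 (big_rho _ _ _ _ _ jm) /= /G jn0.
rewrite facet_j // add0r big_split0 /rho jn0.
rewrite /bump leqNgt j0 /= add0r; apply: eq_big_nat => i /andP[hi _].
rewrite ifF; last by rewrite /bump; case: i hi => // i _; rewrite addnS.
by rewrite facet_bump.
Qed.

Lemma Lk_facet_j m j (y : nat -> R) : (j <= m.+1)%N ->
  Lk m.+1 j (facet_pt m.+1 j y) = 0.
Proof.
move=> jm; case: (posnP j) => [->|j0].
  rewrite /Lk /= big_nat_recr //= /facet_pt /= eqxx.
  rewrite (@eq_big_nat _ _ _ 1 m.+1 (fun i => if i == m.+1 then 1 - \sum_(1 <= i0 < m.+1) y i0 else y i) y).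
    by rewrite addrC subrK subrr.
  by move=> i /andP[_ hi]; rewrite ifF //; apply/negbTE; rewrite neq_ltn hi.
rewrite /Lk ifF; last by case: j j0 {jm}.
exact: facet_j.
Qed.

Lemma Lk_facet_rho m j (y : nat -> R) k : (j <= m.+1)%N -> (k <= m)%N ->
  Lk m.+1 (rho m j k) (facet_pt m.+1 j y) = Lk m k y.
Proof.
move=> jm km; rewrite /rho; case: (posnP j) => [->|j0] /=.
  case: (posnP k) => [->|k0] /=.
    by rewrite /Lk /= /facet_pt /= eqxx.
  rewrite /Lk ifF; last by case: k k0 {km}.
  rewrite ifF; last by case: k k0 {km}.
  rewrite /facet_pt /= ifF //; apply/negbTE; rewrite neq_ltn ltnS km //.
case: (posnP k) => [->|k0].
  rewrite /bump leqNgt j0 /= /Lk /=.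
  by rewrite sum_facet // j0 jm.
rewrite /Lk ifF; last by rewrite /bump; case: k k0 {km} => // k _; rewrite addnS.
rewrite ifF; last by case: k k0 {km}.
exact: facet_bump.
Qed.


Lemma inS_facet m j (y : nat -> R) : (j <= m.+1)%N ->
  in_simplex m.+1 (facet_pt m.+1 j y) = inS m pred0 y.
Proof.
move=> jm; rewrite in_simplexE /inS (big_rho _ _ _ _ _ jm) /= Lk_facet_j //.
rewrite /cnd /= lexx andTb; apply: eq_big_nat => k /andP[_ hk].
by rewrite Lk_facet_rho.
Qed.

Lemma Mon_facet m j a (y : nat -> R) : (j <= m.+1)%N ->
  Mon m.+1 a (facet_pt m.+1 j y) = (a j == 0%N)%:R * Mon m (fun k => a (rho m j k)) y.
Proof.
move=> jm; rewrite /Mon (big_rho _ _ _ _ _ jm) /= Lk_facet_j // expr0n.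
congr (_ * _); apply: eq_big_nat => k /andP[_ hk].
by rewrite Lk_facet_rho.
Qed.

Definition fmap m j (s : seq (R * (nat -> nat))) :=
  [seq ((p.2 j == 0%N)%:R * p.1, fun k => p.2 (rho m j k)) | p <- s].

Lemma PolyS_facet m j s (y : nat -> R) : (j <= m.+1)%N ->
  PolyS m.+1 s (facet_pt m.+1 j y) = PolyS m (fmap m j s) y.
Proof.
move=> jm; rewrite /PolyS /fmap big_map; apply: eq_bigr => p _ /=.
by rewrite Mon_facet // mulrCA mulrA.
Qed.

Lemma facet_int_poly m j s : (j <= m.+1)%N ->
  facet_int m.+1 j (PolyS m.+1 s) = DirS m (fmap m j s).
Proof.
move=> jm; rewrite /facet_int /=.
have -> : (fun y => if in_simplex m.+1 (facet_pt m.+1 j y)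
                    then PolyS m.+1 s (facet_pt m.+1 j y) else 0)
        = (fun y => if inS m pred0 y then PolyS m (fmap m j s) y else 0).
  by apply/funext => y; rewrite inS_facet // PolyS_facet.
exact: main.
Qed.

Definition FD m (a : nat -> nat) : R := (Pf m.+1 a)%:R / ((Sm m.+1 a + m)`!)%:R.

Lemma DirS_fmap m j s : (j <= m.+1)%N ->
  DirS m (fmap m j s) = \sum_(p <- s) (p.2 j == 0%N)%:R * p.1 * FD m p.2.
Proof.
move=> jm; rewrite /DirS /fmap big_map; apply: eq_bigr => p _ /=.
case: eqP => hj; last by rewrite !mul0r.
have hP : Pf m.+1 p.2 = Pf m (fun k => p.2 (rho m j k)).
  by rewrite /Pf (big_rho _ _ _ _ _ jm) /= hj fact0 mul1n.
have hS : Sm m.+1 p.2 = Sm m (fun k => p.2 (rho m j k)).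
  by rewrite /Sm (big_rho _ _ _ _ _ jm) /= hj add0n.
by rewrite /FD /Dir hP hS mul1r.
Qed.

End Facet.

Lemma natS_neq0 {R : realType} N : (N.+1)%:R != 0 :> R.
Proof. by rewrite pnatr_eq0. Qed.

Section Alg.
Context {R : realType}.
Variables (r : nat -> nat) (d : nat -> int) (c : R).
Local Notation mu := (muk R r d).

Definition inc (b : nat -> nat) j := fun k => if k == j then (b k).+1 else b k.
Definition dec (b : nat -> nat) j := fun k => if k == j then (b k).-1 else b k.
Definition lin n (x : nat -> R) := c - \sum_(0 <= k < n.+1) mu k * Lk n k x.
Definition slin n b : seq (R * (nat -> nat)) :=
  (c, b) :: [seq (- mu i, inc b i) | i <- index_iota 0 n.+1].

Lemma big_D1 {T : Type} (idx : T) (op : Monoid.com_law idx) n j (F : nat -> T) :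
  (j <= n)%N ->
  \big[op/idx]_(0 <= k < n.+1) F k = op (F j) (\big[op/idx]_(0 <= k < n.+1 | k != j) F k).
Proof.
by move=> jn; rewrite (bigD1_seq j) ?mem_index_iota ?iota_uniq.
Qed.

Lemma big_inc {T : Type} (idx : T) (op : Monoid.com_law idx) n j
  (F : nat -> nat -> T) b : (j <= n)%N ->
  \big[op/idx]_(0 <= k < n.+1) F k (inc b j k) =
  op (F j (b j).+1) (\big[op/idx]_(0 <= k < n.+1 | k != j) F k (b k)).
Proof.
move=> jn; rewrite (big_D1 _ _ _ _ (fun k => F k (inc b j k)) jn) /inc eqxx.
by congr (op _ _); apply: eq_bigr => k /negbTE ->.
Qed.

Lemma Mon_inc n b j (x : nat -> R) : (j <= n)%N ->
  Mon n (inc b j) x = Lk n j x * Mon n b x.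
Proof.
move=> jn; rewrite /Mon (big_inc _ _ _ _ (fun k v => Lk n k x ^+ v) _ jn).
by rewrite (big_D1 _ _ _ _ _ jn) /= exprS mulrA.
Qed.

Lemma Pf_inc n b j : (j <= n)%N -> Pf n (inc b j) = ((b j).+1 * Pf n b)%N.
Proof.
move=> jn; rewrite /Pf (big_inc _ _ _ _ (fun k v => v`!) _ jn).
by rewrite (big_D1 _ _ _ _ _ jn) /= factS mulnA.
Qed.

Lemma Sm_inc n b j : (j <= n)%N -> Sm n (inc b j) = (Sm n b).+1.
Proof.
move=> jn; rewrite /Sm (big_inc _ _ _ _ (fun k v => v) _ jn).
by rewrite (big_D1 _ _ _ _ _ jn) /= addSn.
Qed.

Lemma sum_inc n b j : (j <= n)%N ->
  \sum_(0 <= i < n.+1) mu i * ((inc b j i).+1)%:R =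
  \sum_(0 <= i < n.+1) mu i * ((b i).+1)%:R + mu j.
Proof.
move=> jn; rewrite (big_inc _ _ _ _ (fun k v => mu k * (v.+1)%:R) _ jn).
rewrite (big_D1 _ _ _ _ _ jn) /=.
rewrite -[in LHS](addn1 (b j).+1) natrD; ring.
Qed.

Lemma PolyS_slin n b (x : nat -> R) : PolyS n (slin n b) x = lin n x * Mon n b x.
Proof.
rewrite /PolyS /slin big_cons big_map /= /lin mulrBl.
rewrite mulr_suml -sumrN.
congr (_ + _); rewrite big_seq_cond [RHS]big_seq_cond; apply: eq_bigr => i.
rewrite andbT mem_index_iota => /andP[_ hi].
by rewrite Mon_inc // mulNr mulrA.
Qed.


Lemma alg2 (P N : nat) (C X : R) :
  C * (P%:R / (N`!)%:R) + - X * (P%:R / (N.+1`!)%:R)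
  = P%:R / (N.+1`!)%:R * (C * N.+1%:R - X).
Proof.
rewrite factS natrM.
have h := fact_neq0 (R:=R) N.
have h1 : 1 + N%:R != 0 :> R by rewrite addrC natr1 natS_neq0.
by field; rewrite h h1.
Qed.

Lemma DirS_slin n b : DirS n (slin n b) =
  (Pf n b)%:R / ((Sm n b + n).+1`!)%:R *
  (c * (Sm n b + n).+1%:R - \sum_(0 <= i < n.+1) mu i * ((b i).+1)%:R).
Proof.
rewrite /DirS /slin big_cons big_map /=.
have -> : \sum_(j <- index_iota 0 n.+1) - mu j * Dir n (inc b j)
   = - (\sum_(0 <= i < n.+1) mu i * ((b i).+1)%:R) * ((Pf n b)%:R / ((Sm n b + n).+1`!)%:R).
  rewrite mulNr mulr_suml -sumrN big_seq_cond [RHS]big_seq_cond; apply: eq_bigr => i.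
  rewrite andbT mem_index_iota => /andP[_ hi].
  by rewrite /Dir Pf_inc // Sm_inc // natrM addSn; ring.
exact: alg2.
Qed.


Definition KK n b k : R := (Pf n b)%:R / ((Sm n b + n)`!)%:R *
  (c * (Sm n b + n)%:R - (\sum_(0 <= i < n.+1) mu i * ((b i).+1)%:R - mu k)).

Lemma inc_dec b k : (1 <= b k)%N -> inc (dec b k) k = b.
Proof.
move=> hb; apply/funext => i; rewrite /inc /dec /=.
case hik: (i == k) => //; move/eqP: hik => ->; exact: prednK.
Qed.

Lemma Qterm' n b k : (k <= n)%N ->
  ((b k).+1)%:R * DirS n (slin n b) = KK n (inc b k) k.
Proof.
move=> kn; rewrite DirS_slin /KK Pf_inc // Sm_inc // sum_inc // addSn natrM.
ring.
Qed.

Lemma Qterm n b k : (k <= n)%N -> (1 <= b k)%N ->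
  (b k)%:R * DirS n (slin n (dec b k)) = KK n b k.
Proof.
move=> kn hb; have := Qterm' n (dec b k) k kn.
by rewrite inc_dec // /dec eqxx prednK.
Qed.

Lemma Fterm m b k : (k <= m.+1)%N ->
  facet_int m.+1 k (PolyS m.+1 (slin m.+1 b)) = (b k == 0%N)%:R * KK m.+1 b k.
Proof.
move=> km; rewrite facet_int_poly // DirS_fmap // /slin big_cons big_map /=.
case: eqP => hb; last first.
  rewrite !mul0r add0r big1_seq // => i /andP[_ hi] /=.
  have -> : (inc b i k == 0%N) = false.
    by rewrite /inc /=; case: (k == i) => //; apply/negbTE/eqP.
  by rewrite !mul0r.
rewrite !mul1r (bigD1_seq k) ?mem_index_iota ?iota_uniq //=.
have -> : (inc b k k == 0%N) = false by rewrite /inc /= eqxx.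
rewrite !mul0r add0r.
set P := Pf m.+1 b; set N := (Sm m.+1 b + m)%N.
have -> : \sum_(i <- index_iota 0 m.+2 | i != k)
      ((inc b i k == 0%N)%:R * - mu i * FD m (inc b i))
    = \sum_(i <- index_iota 0 m.+2 | i != k)
      (- (mu i * ((b i).+1)%:R) * (P%:R / ((N.+1)`!)%:R)).
  rewrite big_seq_cond [RHS]big_seq_cond; apply: eq_bigr => i /andP[hi hik].
  have hki : (k == i) = false by rewrite eq_sym; exact/negbTE.
  have -> : (inc b i k == 0%N) = true by rewrite /inc /= hki hb.
  rewrite mem_index_iota in hi; case/andP: hi => _ hi.
  by rewrite mul1r /FD Pf_inc // Sm_inc // addSn natrM -/P -/N; ring.
rewrite /KK (big_D1 _ _ _ _ (fun i => mu i * ((b i).+1)%:R) km) /= hb.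
rewrite -mulr_suml sumrN addnS -/P -/N.
set X := \sum_(i <- index_iota 0 m.+2 | i != k) _.
have -> : mu k * (0%N.+1)%:R + X - mu k = X by rewrite mulr1; ring.
exact: alg2.
Qed.

End Alg.

Section Q.
Context {R : realType}.
Variables (r : nat -> nat) (d : nat -> int) (c : R) (g : nat).
Local Notation mu := (muk R r d).

Definition S2 := fun k => (2 <= r k)%N.
Definition sQ n b : seq (R * (nat -> nat)) := (2 * (1 - g%:R), b) ::
  flatten [seq [seq ((r k * (r k - 1))%:R * p.1, p.2) | p <- slin r d c n (dec b k)]
          | k <- index_iota 0 n.+1].

Lemma DirS_sQ n b : DirS n (sQ n b) = 2 * (1 - g%:R) * Dir n b +
  \sum_(0 <= k < n.+1) (r k * (r k - 1))%:R * DirS n (slin r d c n (dec b k)).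
Proof.
rewrite /DirS /sQ big_cons big_flatten big_map; congr (_ + _).
apply: eq_bigr => k _; rewrite big_map mulr_sumr; apply: eq_bigr => p _ /=.
by rewrite mulrA.
Qed.

Lemma PolyS_sQ n b x : PolyS n (sQ n b) x = 2 * (1 - g%:R) * Mon n b x +
  \sum_(0 <= k < n.+1) (r k * (r k - 1))%:R * (lin r d c n x * Mon n (dec b k) x).
Proof.
rewrite /PolyS /sQ big_cons big_flatten big_map; congr (_ + _).
apply: eq_bigr => k _; rewrite big_map -PolyS_slin /PolyS mulr_sumr.
by apply: eq_bigr => p _ /=; rewrite mulrA.
Qed.

Lemma inS_allP n S (x : nat -> R) :
  inS n S x = all (fun k => cnd (S k) (Lk n k x)) (index_iota 0 n.+1).
Proof. by rewrite /inS big_all. Qed.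

Lemma inS_at n S (x : nat -> R) k : inS n S x -> (k <= n)%N -> cnd (S k) (Lk n k x).
Proof.
by rewrite inS_allP => /allP h kn; apply: h; rewrite mem_index_iota.
Qed.

Lemma sumL n (x : nat -> R) : \sum_(0 <= k < n.+1) Lk n k x = 1.
Proof.
rewrite big_split0 /Lk /=.
rewrite (@eq_big_nat _ _ _ 1 n.+1 (fun k => if k == 0%N then 1 - \sum_(1 <= j < n.+1) x j else x k) x).
  by rewrite subrK.
by move=> k /andP[hk _]; rewrite ifF //; case: k hk.
Qed.

Lemma lin_neq0 n (x : nat -> R) : (forall k, (k <= n)%N -> mu k < c) ->
  in_simplex n x -> lin r d c n x != 0.
Proof.
move=> hc; rewrite in_simplexE => hin.
have hL : forall k, (k <= n)%N -> 0 <= Lk n k x.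
  by move=> k kn; have := inS_at _ _ _ _ hin kn.
have -> : lin r d c n x = \sum_(0 <= k < n.+1) (c - mu k) * Lk n k x.
  rewrite /lin -{1}[c]mulr1 -(sumL n x) mulr_sumr -sumrB.
  by apply: eq_bigr => k _; rewrite mulrBl.
apply/negP => /eqP h0.
rewrite big_seq_cond in h0.
have hF : forall i, (i \in index_iota 0 n.+1) && true -> 0 <= (c - mu i) * Lk n i x.
  move=> i; rewrite andbT mem_index_iota => /andP[_ hi].
  by rewrite mulr_ge0 // ?hL // subr_ge0 ltW // hc.
have := psumr_eq0 (index_iota 0 n.+1) hF; rewrite h0 eqxx => /esym/allP hall.
have h1 : forall k, (k <= n)%N -> Lk n k x = 0.
  move=> k kn; have : k \in index_iota 0 n.+1 by rewrite mem_index_iota.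
  move=> /[dup] hk /hall; rewrite hk /=.
  rewrite mulf_eq0 => /orP[|/eqP //].
  by rewrite subr_eq0 => /eqP hck; have := hc k kn; rewrite hck ltxx.
have := sumL n x; rewrite big_seq_cond big1 => [/eqP|i].
  by rewrite eq_sym oner_eq0.
by rewrite andbT mem_index_iota => /andP[_ hi]; exact: h1.
Qed.


Lemma Qpt n b (x : nat -> R) :
  (forall k, (k <= n)%N -> (1 <= r k)%N) ->
  (forall k, (k <= n)%N -> mu k < c) ->
  (forall k, (k <= n)%N -> (2 <= r k)%N -> (1 <= b k)%N) ->
  (if in_simplex n x then Qf n r d g c x * (lin r d c n x * Mon n b x) else 0)
  = (if inS n S2 x then PolyS n (sQ n b) x else 0).
Proof.
move=> hr hc hb.
have Mdec : forall k, (k <= n)%N -> (2 <= r k)%N ->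
    Mon n b x = Lk n k x * Mon n (dec b k) x.
  by move=> k kn hk; rewrite -Mon_inc // inc_dec // hb.
case hS: (inS n S2 x).
  have hin : in_simplex n x.
    rewrite in_simplexE inS_allP; apply/allP => k.
    rewrite mem_index_iota => /andP[_ hk].
    exact: cnd_ge0 (inS_at _ _ _ _ hS hk).
  have hl := lin_neq0 n x hc hin.
  rewrite hin PolyS_sQ /Qf mulrDl; congr (_ + _).
    by rewrite -/(lin r d c n x) mulrA divfK.
  rewrite mulr_suml big_mkcond /= big_seq [RHS]big_seq; apply: eq_bigr => k.
  rewrite mem_index_iota => /andP[_ kn].
  case: ifP => hk.
    have hLk : Lk n k x != 0.
      by have := inS_at _ _ _ _ hS kn; rewrite /S2 /cnd hk => /lt0r_neq0.
    rewrite (Mdec k kn hk).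
    by field.
  have -> : (r k * (r k - 1))%N = 0%N.
    by have := hr k kn; move: hk; case: (r k) => [|[|]].
  by rewrite mul0r.
case hin: (in_simplex n x) => //.
move: hS; rewrite inS_allP => /negbT/allPn [k].
rewrite mem_index_iota => /andP[_ kn].
have := inS_at _ _ _ _ (etrans (esym (in_simplexE n x)) hin) kn.
rewrite /cnd /= /S2 => h0; case: ifP => hk; last by rewrite h0.
rewrite lt0r h0 andbT negbK => /eqP hL.
by rewrite (Mdec k kn hk) hL mul0r !mulr0.
Qed.

End Q.

Definition aa (r : nat -> nat) := fun k => (r k).-1.

Section Final.
Context {R : realType}.
Variables (r : nat -> nat) (d : nat -> int) (c : R) (g m : nat).
Hypothesis hr : forall k, (k <= m.+1)%N -> (1 <= r k)%N.
Hypothesis hc : forall k, (k <= m.+1)%N -> muk R r d k < c.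
Local Notation l := m.+1.
Local Notation mu := (muk R r d).
Local Notation a := (aa r).
Local Notation N := (Sm l a + l)%N.
Local Notation P := (Pf l a).
Local Notation D := (\sum_(0 <= i < l.+1) mu i * ((a i).+1)%:R).

Lemma simplex_poly n (s : seq (R * (nat -> nat))) : simplex_int n (PolyS n s) = DirS n s.
Proof.
rewrite /simplex_int.
have -> : (fun x => if in_simplex n x then PolyS n s x else 0)
        = (fun x => if inS n pred0 x then PolyS n s x else 0).
  by apply/funext => x; rewrite in_simplexE.
exact: main.
Qed.

Lemma aS k : (k <= l)%N -> (a k).+1 = r k.
Proof. by move=> kl; rewrite /aa prednK // hr. Qed.

Lemma rV_N : (\sum_(0 <= k < l.+1) r k)%N = N.+1.
Proof.
rewrite /Sm.
rewrite (@eq_big_nat _ _ _ 0 l.+1 r (fun k => a k + 1)%N); last first.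
  by move=> k /andP[_ hk]; rewrite addn1 aS.
by rewrite big_split /= sum_nat_const_nat subn0 muln1 addnS.
Qed.

Lemma rmu k : (k <= l)%N -> (r k)%:R * mu k = (d k)%:~R.
Proof.
move=> kl; rewrite /muk mulrC divfK //.
by rewrite pnatr_eq0 -lt0n hr.
Qed.

Lemma dV_D : \sum_(0 <= k < l.+1) ((d k)%:~R : R) = D.
Proof.
rewrite big_seq_cond [RHS]big_seq_cond; apply: eq_bigr => k.
rewrite andbT mem_index_iota => /andP[_ hk].
by rewrite aS // mulrC rmu.
Qed.

Lemma sum_rE (E : R) :
  \sum_(0 <= k < l.+1) (r k)%:R * (E + mu k) = (N.+1)%:R * E + D.
Proof.
rewrite -rV_N natr_sum mulr_suml -dV_D -big_split /=.
rewrite big_seq_cond [RHS]big_seq_cond; apply: eq_bigr => k.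
rewrite andbT mem_index_iota => /andP[_ hk].
by rewrite mulrDr rmu.
Qed.

Lemma pcE : pc l r d c = PolyS l (slin r d c l a).
Proof. by apply/funext => x; rewrite PolyS_slin. Qed.

Lemma xpcE j : (1 <= j <= l)%N ->
  (fun x => x j * pc l r d c x) = PolyS l (slin r d c l (inc a j)).
Proof.
move=> /andP[j1 jl]; apply/funext => x; rewrite PolyS_slin Mon_inc //.
rewrite /Lk ifF; last by case: j j1 {jl}.
by rewrite /pc mulrCA.
Qed.

Lemma alpha0_val : alpha0 l r d c = P%:R / ((N.+1)`!)%:R * (c * N.+1%:R - D).
Proof. by rewrite /alpha0 pcE simplex_poly DirS_slin. Qed.

Lemma alpha1_val j : (1 <= j <= l)%N -> alpha1 l r d c j =
  (r j * P)%:R / ((N.+2)`!)%:R * (c * N.+2%:R - (D + mu j)).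
Proof.
move=> hj; rewrite /alpha1 (xpcE j hj) simplex_poly DirS_slin.
case/andP: hj => _ jl.
by rewrite Pf_inc // Sm_inc // sum_inc // aS // addSn.
Qed.


Lemma xxpcE j k : (1 <= j <= l)%N -> (1 <= k <= l)%N ->
  (fun x => x j * x k * pc l r d c x) = PolyS l (slin r d c l (inc (inc a k) j)).
Proof.
move=> /andP[j1 jl] /andP[k1 kl]; apply/funext => x.
rewrite PolyS_slin Mon_inc // Mon_inc //.
rewrite /Lk ifF; last by case: j j1 {jl}.
rewrite ifF; last by case: k k1 {kl}.
by rewrite /pc -mulrA (mulrCA (x k)) (mulrCA (x j)).
Qed.

Lemma alpha2_val j k : (1 <= j <= l)%N -> (1 <= k <= l)%N -> alpha2 l r d c j k =
  ((inc a k j).+1 * (r k * P))%:R / ((N.+3)`!)%:R * (c * N.+3%:R - (D + mu k + mu j)).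
Proof.
move=> hj hk; rewrite /alpha2 (xxpcE j k hj hk) simplex_poly DirS_slin.
case/andP: hj => _ jl; case/andP: hk => _ kl.
by rewrite Pf_inc // Sm_inc // sum_inc // Pf_inc // Sm_inc // sum_inc // aS // !addSn.
Qed.

Lemma hbA k : (k <= l)%N -> (2 <= r k)%N -> (1 <= a k)%N.
Proof. by move=> _; rewrite /aa; case: (r k) => [|[|]]. Qed.

Lemma boundaryE (b : nat -> nat) :
  boundary_int l (PolyS l (slin r d c l b)) =
  \sum_(0 <= k < l.+1) (b k == 0%N)%:R * KK r d c l b k.
Proof.
rewrite /boundary_int big_seq_cond [RHS]big_seq_cond; apply: eq_bigr => k.
rewrite andbT mem_index_iota => /andP[_ hk].
by rewrite Fterm.
Qed.

Lemma beta0_val : beta0 l r d g c = 2 * (1 - g%:R) * (P%:R / (N`!)%:R) +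
  \sum_(0 <= k < l.+1) (r k)%:R * KK r d c l a k.
Proof.
rewrite /beta0 /simplex_int.
have -> : (fun x => if in_simplex l x then Qf l r d g c x * pc l r d c x else 0)
   = (fun x => if inS l (S2 r) x then PolyS l (sQ r d c g l a) x else 0).
  apply/funext => x; exact: (Qpt r d c g l a x hr hc hbA).
rewrite main DirS_sQ pcE boundaryE -addrA -big_split /=; congr (_ + _).
rewrite big_seq_cond [RHS]big_seq_cond; apply: eq_bigr => k.
rewrite andbT mem_index_iota => /andP[_ hk].
case: (leqP 2 (r k)) => h2.
  have ha := hbA k hk h2.
  have -> : (a k == 0%N) = false by case: (a k) ha.
  rewrite mul0r addr0.
  have -> : (r k * (r k - 1))%N = (r k * a k)%N by rewrite subn1.
  by rewrite natrM -mulrA Qterm.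
have r1 : r k = 1%N by have := hr k hk; case: (r k) h2 => [|[|]].
have -> : a k = 0%N by rewrite /aa r1.
by rewrite r1 mul0r add0r.
Qed.


Definition Zk j k : R := P%:R / ((N.+1)`!)%:R * (c * N.+1%:R - (D + mu j - mu k)).

Lemma beta1_val j : (1 <= j <= l)%N -> beta1 l r d g c j =
  2 * (1 - g%:R) * ((r j * P)%:R / ((N.+1)`!)%:R) +
  \sum_(0 <= k < l.+1) (r k)%:R * ((r j)%:R - (k == j)%:R) * Zk j k.
Proof.
move=> hj; have /andP[j1 jl] := hj.
set b := inc a j.
have hbB : forall k, (k <= l)%N -> (2 <= r k)%N -> (1 <= b k)%N.
  move=> k kl h2; rewrite /b /inc; case: (k == j) => //.
  exact: (hbA k kl h2).
rewrite /beta1 /simplex_int.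
have -> : (fun x => if in_simplex l x then Qf l r d g c x * x j * pc l r d c x else 0)
   = (fun x => if inS l (S2 r) x then PolyS l (sQ r d c g l b) x else 0).
  apply/funext => x; rewrite -(Qpt r d c g l b x hr hc hbB).
  case: (in_simplex l x) => //.
  rewrite /b Mon_inc // /Lk ifF; last by case: j j1 {jl hj b hbB}.
  by rewrite /pc -mulrA (mulrCA (x j)).
rewrite main DirS_sQ (xpcE j hj) boundaryE -addrA -big_split /=; congr (_ + _).
  by rewrite /Dir /b Pf_inc // Sm_inc // aS // addSn.
have KKb : forall k, (k <= l)%N -> KK r d c l b k = (r j)%:R * Zk j k.
  move=> k kl; rewrite /KK /Zk /b Pf_inc // Sm_inc // sum_inc // aS // addSn natrM.
  ring.
rewrite big_seq_cond [RHS]big_seq_cond; apply: eq_bigr => k.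
rewrite andbT mem_index_iota => /andP[_ hk].
have bkE : b k = if k == j then r k else a k.
  by rewrite /b /inc; case: eqP => [->|//]; rewrite aS.
case: (leqP 2 (r k)) => h2.
  have hbk := hbB k hk h2.
  have -> : (b k == 0%N) = false by case: (b k) hbk.
  rewrite mul0r addr0.
  case: eqP bkE => [ekj|nkj] bkE.
    subst k.
    have -> : (r j * (r j - 1))%N = ((r j - 1) * b j)%N by rewrite bkE mulnC.
    rewrite natrM -mulrA Qterm // KKb // natrB ?hr //=; ring.
  have -> : (r k * (r k - 1))%N = (r k * b k)%N by rewrite bkE subn1.
  by rewrite natrM -mulrA Qterm // KKb // subr0 mulrA.
have r1 : r k = 1%N by have := hr k hk; case: (r k) h2 => [|[|]].
rewrite r1 mul0r add0r.
case: eqP bkE => [ekj|nkj] bkE.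
  subst k; rewrite -/b bkE r1 /=; ring.
rewrite -/b bkE /aa r1 /= KKb //; ring.
Qed.

End Final.

Theorem proposition3p9 (R : realType) (l : nat) (r : nat -> nat)
  (d : nat -> int) (g : nat) (c : R)
  (hl : (1 <= l)%N)
  (hr : forall k, (k <= l)%N -> (1 <= r k)%N)
  (hc : forall k, (k <= l)%N -> muk R r d k < c) :
  let rV : nat := (\sum_(0 <= k < l.+1) r k)%N in
  let dV : R := \sum_(0 <= k < l.+1) (d k)%:~R in
  let piR : R := (\prod_(0 <= k < l.+1) ((r k).-1)`!)%:R in
  let mu := muk R r d in
  alpha0 l r d c = piR / (rV`!)%:R * (c * rV%:R - dV)
  /\ (forall j, (1 <= j <= l)%N ->
        alpha1 l r d c j
        = piR / (rV.+1`!)%:R * (r j)%:R * (c * (rV.+1)%:R - dV - mu j))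
  /\ (forall j k, (1 <= j <= l)%N -> (1 <= k <= l)%N -> j != k ->
        alpha2 l r d c j k
        = piR / (rV.+2`!)%:R * (r j)%:R * (r k)%:R
            * (c * (rV.+2)%:R - dV - mu j - mu k))
  /\ (forall j, (1 <= j <= l)%N ->
        alpha2 l r d c j j
        = piR / (rV.+2`!)%:R * (r j)%:R * ((r j).+1)%:R
            * (c * (rV.+2)%:R - dV - 2 * mu j))
  /\ beta0 l r d g c
     = piR / ((rV.-1)`!)%:R
       * ((rV%:R - 1) * rV%:R * c + 2 * (1 - g%:R) - (rV%:R - 1) * dV)
  /\ (forall j, (1 <= j <= l)%N ->
        beta1 l r d g c j
        = piR * (r j)%:R / (rV`!)%:R
          * (rV%:R * (rV%:R - 1) * c + 2 * (1 - g%:R)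
             - dV * (rV%:R - 2) - rV%:R * mu j)).
Proof.
case: l hl hr hc => [//|m] hl hr hc.
move=> rV dV piR mu.
have eN : rV = (Sm m.+1 (aa r) + m.+1).+1 by exact: rV_N.
have eD : dV = \sum_(0 <= i < m.+2) muk R r d i * ((aa r i).+1)%:R by exact: dV_D.
have eP : piR = (Pf m.+1 (aa r))%:R by [].
rewrite /mu eP eN eD.
set N := (Sm m.+1 (aa r) + m.+1)%N.
set D := \sum_(0 <= i < m.+2) muk R r d i * ((aa r i).+1)%:R.
set P := Pf m.+1 (aa r).
split; first by rewrite alpha0_val.
split.
  move=> j hj; rewrite alpha1_val // -/N -/D -/P natrM.
  ring.
split.
  move=> j k hj hk jk; rewrite alpha2_val // -/N -/D -/P.
  have -> : inc (aa r) k j = aa r j by rewrite /inc ifF //; exact/negbTE.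
  rewrite (aS r m hr) //; last by case/andP: hj.
  rewrite !natrM; ring.
split.
  move=> j hj; rewrite alpha2_val // -/N -/D -/P.
  have -> : inc (aa r) j j = (aa r j).+1 by rewrite /inc eqxx.
  rewrite (aS r m hr) //; last by case/andP: hj.
  rewrite !natrM; ring.
split.
  rewrite (beta0_val r d c g m hr hc) -/N -/P.
  have -> : \sum_(0 <= k < m.+2) (r k)%:R * KK r d c m.+1 (aa r) k =
      P%:R / (N`!)%:R * \sum_(0 <= k < m.+2) (r k)%:R * ((c * N%:R - D) + muk R r d k).
    rewrite mulr_sumr; apply: eq_bigr => k _; rewrite /KK -/N -/P -/D; ring.
  rewrite (sum_rE r d m hr) -/N -/D /=.
  ring.
move=> j hj; rewrite (beta1_val r d c g m hr hc j hj) -/N -/P.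
have jl : (j <= m.+1)%N by case/andP: hj.
set Z := Zk r d c m j.
have e1 : \sum_(0 <= k < m.+2) (r k)%:R * ((r j)%:R - (k == j)%:R) * Z k =
    (r j)%:R * \sum_(0 <= k < m.+2) (r k)%:R * Z k - (r j)%:R * Z j.
  rewrite (big_D1 _ _ _ _ _ jl) [in RHS](big_D1 _ _ _ _ _ jl) /= eqxx mulrDr.
  have -> : \sum_(0 <= i < m.+2 | i != j) (r i)%:R * ((r j)%:R - (i == j)%:R) * Z i
      = (r j)%:R * \sum_(0 <= i < m.+2 | i != j) ((r i)%:R * Z i).
    by rewrite mulr_sumr; apply: eq_bigr => i /negbTE ->; rewrite subr0; ring.
  rewrite /=; ring.
have e2 : \sum_(0 <= k < m.+2) (r k)%:R * Z k = P%:R / ((N.+1)`!)%:R *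
    \sum_(0 <= k < m.+2) (r k)%:R * ((c * N.+1%:R - D - muk R r d j) + muk R r d k).
  rewrite mulr_sumr; apply: eq_bigr => k _; rewrite /Z /Zk -/N -/P -/D; ring.
rewrite e1 e2 (sum_rE r d m hr) -/N -/D /Z /Zk -/N -/P -/D natrM.
ring.
Qed.
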